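(* Consider the averaged switched RLC circuit $$-L\dot I=RI+\Gamma(u)V-B(u)V_s,\qquad C\dot V=\Gamma(u)^\top I-GV,$$ where $\Gamma(u)=u\Gamma_1+(1-u)\Gamma_0$, $B(u)=uB_1+(1-u)B_0$, $u\in[0,1]$ is the duty cycle and $V_s\in\mathbb{R}^m$ is a constant voltage source, together with its extended dynamics $$-L\ddot I=R\dot I+\Gamma(u)\dot V+\big((\Gamma_1-\Gamma_0)V-(B_1-B_0)V_s\big)\upsilon,\quad C\ddot V=\Gamma(u)^\top\dot I+(\Gamma_1-\Gamma_0)^\top I\,\upsilon-G\dot V,\quad \dot u=\upsilon,$$ with extended state $(I,V,\dot I,\dot V,u)$ and input $\upsilon\in\mathbb{R}$. Assume $L,C$ are constant symmetric positive definite and $R,G$ are symmetric positive semi-definite. Then the extended system is passive with respect to the storage function $S=\tfrac12\dot I^\top L\dot I+\tfrac12\dot V^\top C\dot V$ and the port-variables $\upsilon$ and $$y=\dot V^\top(\Gamma_1-\Gamma_0)^\top I-\dot I^\top(\Gamma_1-\Gamma_0)V-\dot I^\top(B_0-B_1)V_s,$$ i.e. $\dot S\le \upsilon\, y$ along trajectories.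
   Context: $I\in\mathbb{R}^\sigma$ (inductor currents), $V\in\mathbb{R}^\rho$ (capacitor voltages), $L\in\mathbb{R}^{\sigma\times\sigma}$, $C\in\mathbb{R}^{\rho\times\rho}$, $R\in\mathbb{R}^{\sigma\times\sigma}$, $G\in\mathbb{R}^{\rho\times\rho}$, $\Gamma_0,\Gamma_1\in\mathbb{R}^{\sigma\times\rho}$, $B_0,B_1\in\mathbb{R}^{\sigma\times m}$ constant. Passivity with respect to storage $S\ge0$ and port-variables (input $a$, output $b$) means $\dot S\le a^\top b$ along trajectories. *)

(* Defs.v *)
From mathcomp Require Import all_boot all_algebra.
From mathcomp Require Import all_classical all_reals all_analysis.
Import numFieldNormedType.Exports.
Set Implicit Arguments. Unset Strict Implicit. Unset Printing Implicit Defensive.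
Local Open Scope ring_scope.

Definition scal {K : Type} (M : 'M[K]_1) : K := M ord0 ord0.

Definition qform {K : pzRingType} {n : nat} (x : 'cV[K]_n) (A : 'M[K]_n) : K :=
  scal (x^T *m A *m x).

Definition sym_posdef {K : numDomainType} {n : nat} (A : 'M[K]_n) : Prop :=
  A^T = A /\ forall x : 'cV[K]_n, x != 0 -> 0 < qform x A.

Definition sym_possemidef {K : numDomainType} {n : nat} (A : 'M[K]_n) : Prop :=
  A^T = A /\ forall x : 'cV[K]_n, 0 <= qform x A.

Definition mxconv {K : pzRingType} {p q : nat} (M0 M1 : 'M[K]_(p, q)) (u : K)
  : 'M[K]_(p, q) := u *: M1 + (1 - u) *: M0.

(* Main.v *)
Require Import Defs.
From mathcomp Require Import all_boot all_algebra.
From mathcomp Require Import all_classical all_reals all_analysis.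
Import numFieldNormedType.Exports.
From mathcomp Require Import ring.
Import GRing.Theory Num.Theory.
Local Open Scope ring_scope.
Local Open Scope classical_set_scope.


Section H.
Variable R : realType.

Lemma isd_entry m n (f : R -> 'M[R]_(m, n)) t i j :
  derivable f t 1 -> is_derive t (1:R) (fun x => f x i j) (('D_1 f t) i j).
Proof.
move=> df; have /derivable_mxP dij := df.
apply: DeriveDef; first exact: dij.
by rewrite derive_mx // mxE.
Qed.

Lemma isd_prod (a b : R -> R) (c : R) t (da db : R) :
  is_derive t (1:R) a da -> is_derive t (1:R) b db ->
  is_derive t (1:R) (fun x => a x * c * b x) (da * c * b t + a t * c * db).
Proof.
move=> ha hb.
have -> : (fun x => a x * c * b x) = (a * cst c) * b by apply/funext.
have H : is_derive t (1:R) ((a * cst c) * b)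
   ((a t * c) *: db + b t *: (a t *: 0 + c *: da)) by apply: is_deriveM.
apply: is_derive_eq; rewrite /= scaler0 add0r /GRing.scale /=.
by rewrite mulrC (mulrC c) mulrA (mulrC (b t)) addrC.
Qed.

Lemma scal_bil n (A : 'M[R]_n) (x y : 'cV[R]_n) :
  scal (x^T *m A *m y) = \sum_(j < n) \sum_(k < n) x k 0 * A k j * y j 0.
Proof.
rewrite /scal !mxE; apply: eq_bigr => j _; rewrite !mxE big_distrl /=.
by apply: eq_bigr => k _; rewrite !mxE.
Qed.

Lemma isd_bil n (A : 'M[R]_n) (f g : R -> 'cV[R]_n) t :
  derivable f t 1 -> derivable g t 1 ->
  is_derive t (1:R) (fun x => scal ((f x)^T *m A *m g x))
    (scal (('D_1 f t)^T *m A *m g t) + scal ((f t)^T *m A *m 'D_1 g t)).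
Proof.
move=> df dg.
have -> : (fun x => scal ((f x)^T *m A *m g x)) =
  \sum_(j < n) \sum_(k < n) (fun x => f x k 0 * A k j * g x j 0).
  apply/funext => x; rewrite scal_bil fct_sumE; apply: eq_bigr => j _.
  by rewrite fct_sumE.
rewrite !scal_bil -big_split /=.
apply: is_derive_sum => j; rewrite -big_split /=.
apply: is_derive_sum => k.
by apply: isd_prod; apply: isd_entry.
Qed.

Lemma scal_tr (M : 'M[R]_1) : scal M^T = scal M.
Proof. by rewrite /scal mxE. Qed.
Lemma scalD (M N : 'M[R]_1) : scal (M + N) = scal M + scal N.
Proof. by rewrite /scal mxE. Qed.
Lemma scalN (M : 'M[R]_1) : scal (- M) = - scal M.
Proof. by rewrite /scal mxE. Qed.
Lemma scalZ k (M : 'M[R]_1) : scal (k *: M) = k * scal M.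
Proof. by rewrite /scal mxE. Qed.
Lemma scal_trans p q (x : 'cV[R]_p) (M : 'M[R]_(p, q)) (z : 'cV[R]_q) :
  scal (x^T *m M *m z) = scal (z^T *m M^T *m x).
Proof. by rewrite -scal_tr !trmx_mul trmxK mulmxA. Qed.
End H.

Theorem proposition2 (R : realType) (sigma rho m : nat)
  (L Rr : 'M[R]_sigma) (C G : 'M[R]_rho)
  (Gam0 Gam1 : 'M[R]_(sigma, rho)) (B0 B1 : 'M[R]_(sigma, m)) (Vs : 'cV[R]_m)
  (I Id : R -> 'cV[R]_sigma) (V Vd : R -> 'cV[R]_rho) (u ups : R -> R) :
  sym_posdef L -> sym_posdef C -> sym_possemidef Rr -> sym_possemidef G ->
  (forall t, u t \in `[0, 1]) ->
  (forall t, derivable I t 1) -> (forall t, derivable V t 1) ->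
  (forall t, derivable Id t 1) -> (forall t, derivable Vd t 1) ->
  (forall t, derivable u t 1) ->
  (forall t, derive1 I t = Id t) ->
  (forall t, derive1 V t = Vd t) ->
  (forall t, derive1 u t = ups t) ->
  (forall t, - (L *m derive1 Id t) =
       Rr *m Id t + mxconv Gam0 Gam1 (u t) *m Vd t
       + ups t *: ((Gam1 - Gam0) *m V t - (B1 - B0) *m Vs)) ->
  (forall t, C *m derive1 Vd t =
       (mxconv Gam0 Gam1 (u t))^T *m Id t + ups t *: ((Gam1 - Gam0)^T *m I t)
       - G *m Vd t) ->
  let S := fun t => 2^-1 * qform (Id t) L + 2^-1 * qform (Vd t) C in
  let y := fun t => scal ((Vd t)^T *m (Gam1 - Gam0)^T *m I t)
                    - scal ((Id t)^T *m (Gam1 - Gam0) *m V t)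
                    - scal ((Id t)^T *m (B0 - B1) *m Vs) in
  forall t, derivable S t 1 /\ derive1 S t <= ups t * y t.
Proof.
move=> hL hC hR hG hu dI dV dId dVd du eI eV eu e1 e2 S y t.
have h1 := @isd_bil R _ L _ _ t (dId t) (dId t).
have h2 := @isd_bil R _ C _ _ t (dVd t) (dVd t).
have HS : is_derive t (1:R) S
  (2^-1 * (scal (('D_1 Id t)^T *m L *m Id t) + scal ((Id t)^T *m L *m 'D_1 Id t))
 + 2^-1 * (scal (('D_1 Vd t)^T *m C *m Vd t) + scal ((Vd t)^T *m C *m 'D_1 Vd t))).
  have -> : S = (cst 2^-1 * (fun x => scal ((Id x)^T *m L *m Id x)))
              + (cst 2^-1 * (fun x => scal ((Vd x)^T *m C *m Vd x))) by apply/funext.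
  apply: is_derive_eq.
  rewrite /= /GRing.scale /= !mulr0 !addr0; done.
split; first by case: HS.
rewrite derive1E; have [_ ->] := HS.
have e1' := e1 t; have e2' := e2 t; rewrite derive1E in e1'; rewrite derive1E in e2'.
rewrite (@scal_trans R _ _ ('D_1 Id t)) (@scal_trans R _ _ ('D_1 Vd t)) hL.1 hC.1.
have E1 : L *m 'D_1 Id t = - (Rr *m Id t + mxconv Gam0 Gam1 (u t) *m Vd t
       + ups t *: ((Gam1 - Gam0) *m V t - (B1 - B0) *m Vs)) by rewrite -e1' opprK.
rewrite -!mulmxA E1 e2'.
rewrite !(mulmxDr, mulmxN, mulmxBr, =^~ scalemxAr).
rewrite !(scalD, scalN, scalZ) !mulmxA /y.
rewrite -[B0 - B1]opprB mulmxN mulNmx scalN.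
rewrite (@scal_trans R _ _ (Vd t) (mxconv Gam0 Gam1 (u t))^T) trmxK.
have q1 := hR.2 (Id t); have q2 := hG.2 (Vd t); rewrite /qform in q1 q2.
move: q1 q2.
move: (scal ((Id t)^T *m Rr *m Id t)) (scal ((Vd t)^T *m G *m Vd t)) (ups t)
  (scal ((Id t)^T *m mxconv Gam0 Gam1 (u t) *m Vd t))
  (scal ((Id t)^T *m (Gam1 - Gam0) *m V t)) (scal ((Id t)^T *m (B1 - B0) *m Vs))
  (scal ((Vd t)^T *m (Gam1 - Gam0)^T *m I t)) => a b k c d e f ha hb.
rewrite -subr_ge0.
have -> : k * (f - d - - e) -
  (2^-1 * (- (a + c + k * (d - e)) - (a + c + k * (d - e))) +
   2^-1 * (c + k * f - b + (c + k * f - b))) = a + b by field; rewrite ?pnatr_eq0.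
exact: addr_ge0.
Qed.
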